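(* Let $(X,\mathrm{d})$ be a compact metric space and let $f\colon X\to X$ be a bi-Lipschitz homeomorphism such that $\mathrm{d}$ is $f$-hyperbolic. Then $f$ is $\mathrm{d}_W$-robustly expansive: there are $\epsilon,\delta>0$ such that every bi-Lipschitz homeomorphism $g\colon X\to X$ with $\mathrm{d}_W(f,g)<\epsilon$ is expansive with expansive constant $\delta$.
   Context: A homeomorphism $g$ of a compact metric space $(X,\mathrm{d})$ is expansive with expansive constant $\delta>0$ if $\mathrm{d}(g^n(x),g^n(y))\le\delta$ for all $n\in\mathbb Z$ implies $x=y$. A metric $\mathrm{d}$ defining the topology of $X$ is $f$-hyperbolic if there are $\delta>0$ and $\lambda>1$ such that $\mathrm{d}(x,y)<\delta$ implies $\max\{\mathrm{d}(f(x),f(y)),\mathrm{d}(f^{-1}(x),f^{-1}(y))\}\ge\lambda\,\mathrm{d}(x,y)$. For homeomorphisms $f,g$ of $X$, $\mathrm{d}_{C^0}(f,g)=\max_{x}\mathrm{d}(f(x),g(x))+\max_x\mathrm{d}(f^{-1}(x),g^{-1}(x))$. For Lipschitz maps, $\mathrm{d}'_W(f,g)=\sup_{x\ne y}\frac{|\mathrm{d}(f(x),f(y))-\mathrm{d}(g(x),g(y))|}{\mathrm{d}(x,y)}$, and for bi-Lipschitz homeomorphisms $\mathrm{d}_W(f,g)=\mathrm{d}_{C^0}(f,g)+\mathrm{d}'_W(f,g)+\mathrm{d}'_W(f^{-1},g^{-1})$. *)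

(* Defs.v *)
From Stdlib Require Import Reals Lra ZArith List Classical ClassicalEpsilon.
Open Scope R_scope.

Definition is_metric {X : Type} (d : X -> X -> R) : Prop :=
  (forall x y, 0 <= d x y) /\
  (forall x y, d x y = 0 <-> x = y) /\
  (forall x y, d x y = d y x) /\
  (forall x y z, d x z <= d x y + d y z).

Definition is_open {X : Type} (d : X -> X -> R) (U : X -> Prop) : Prop :=
  forall x, U x -> exists r, 0 < r /\ forall y, d x y < r -> U y.

Definition metric_compact {X : Type} (d : X -> X -> R) : Prop :=
  forall (I : Type) (U : I -> X -> Prop),
    (forall i, is_open d (U i)) ->
    (forall x, exists i, U i x) ->
    exists l : list I, forall x, exists i, In i l /\ U i x.

Definition lipschitz {X : Type} (d : X -> X -> R) (f : X -> X) : Prop :=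
  exists L, forall x y, d (f x) (f y) <= L * d x y.

Definition bilip_homeo {X : Type} (d : X -> X -> R) (f finv : X -> X) : Prop :=
  (forall x, finv (f x) = x) /\ (forall x, f (finv x) = x) /\
  lipschitz d f /\ lipschitz d finv.

Definition iterZ {X : Type} (g ginv : X -> X) (n : Z) (x : X) : X :=
  match n with
  | Z0 => x
  | Zpos p => Nat.iter (Pos.to_nat p) g x
  | Zneg p => Nat.iter (Pos.to_nat p) ginv x
  end.

Definition expansive_with {X : Type} (d : X -> X -> R) (g ginv : X -> X) (delta : R) : Prop :=
  forall x y, (forall n : Z, d (iterZ g ginv n x) (iterZ g ginv n y) <= delta) -> x = y.

Definition hyperbolic_metric {X : Type} (d : X -> X -> R) (f finv : X -> X) : Prop :=
  exists delta lambda, 0 < delta /\ 1 < lambda /\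
    forall x y, d x y < delta ->
      Rmax (d (f x) (f y)) (d (finv x) (finv y)) >= lambda * d x y.

(** Supremum of a set of reals (0 if empty or unbounded; only used on
    nonempty bounded sets or on the empty set). *)
Definition Rsup (E : R -> Prop) : R :=
  match excluded_middle_informative (bound E /\ exists x, E x) with
  | left H => proj1_sig (completeness E (proj1 H) (proj2 H))
  | right _ => 0
  end.

Definition dC0 {X : Type} (d : X -> X -> R) (f finv g ginv : X -> X) : R :=
  Rsup (fun r => exists x, r = d (f x) (g x)) +
  Rsup (fun r => exists x, r = d (finv x) (ginv x)).

Definition dW' {X : Type} (d : X -> X -> R) (f g : X -> X) : R :=
  Rsup (fun r => exists x y, x <> y /\
          r = Rabs (d (f x) (f y) - d (g x) (g y)) / d x y).

Definition dW {X : Type} (d : X -> X -> R) (f finv g ginv : X -> X) : R :=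
  dC0 d f finv g ginv + dW' d f g + dW' d finv ginv.

(* Main.v *)
Require Import Defs.
From Stdlib Require Import Reals ZArith.
From Stdlib Require Import Lra Lia Classical ClassicalEpsilon.
Open Scope R_scope.

Lemma Rsup_ge0 (E : R -> Prop) : (forall r, E r -> 0 <= r) -> 0 <= Rsup E.
Proof.
  intros H0. unfold Rsup.
  destruct excluded_middle_informative as [H|H]; [|lra].
  destruct (completeness E (proj1 H) (proj2 H)) as [m Hm]; simpl; destruct Hm as [Hub Hlb0].
  destruct (proj2 H) as [x Hx].
  apply Rle_trans with x; auto.
Qed.

Lemma Rsup_ub (E : R -> Prop) r : bound E -> E r -> r <= Rsup E.
Proof.
  intros Hb Hr. unfold Rsup.
  destruct excluded_middle_informative as [H|H].
  - destruct (completeness E (proj1 H) (proj2 H)) as [m Hm]; simpl; destruct Hm as [Hub Hlb0]. apply Hub; auto.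
  - exfalso; apply H; split; eauto.
Qed.

Lemma dW'_bound {X : Type} (d : X -> X -> R) (f g : X -> X) :
  is_metric d -> lipschitz d f -> lipschitz d g ->
  forall x y, Rabs (d (f x) (f y) - d (g x) (g y)) <= dW' d f g * d x y.
Proof.
  intros [Hn [He [Hs Ht]]] [Lf HLf] [Lg HLg] x y.
  destruct (classic (x = y)) as [Exy|Hxy]; [subst y|].
  - assert (d x x = 0) by (apply He; auto).
    assert (d (f x) (f x) = 0) by (apply He; auto).
    assert (d (g x) (g x) = 0) by (apply He; auto).
    rewrite H, H0, H1. rewrite Rminus_0_r, Rabs_R0. lra.
  - assert (Hpos : 0 < d x y).
    { destruct (Hn x y) as [h|h]; auto. exfalso; apply Hxy, He; auto. }
    assert (Hb : bound (fun r => exists x y, x <> y /\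
          r = Rabs (d (f x) (f y) - d (g x) (g y)) / d x y)).
    { exists (Rabs Lf + Rabs Lg). intros r [a [b [Hab ->]]].
      assert (Hp : 0 < d a b).
      { destruct (Hn a b) as [h|h]; auto. exfalso; apply Hab, He; auto. }
      specialize (HLf a b). specialize (HLg a b).
      pose proof (Hn (f a) (f b)). pose proof (Hn (g a) (g b)).
      pose proof (Rle_abs Lf). pose proof (Rle_abs Lg).
      apply Rmult_le_reg_r with (d a b); [lra|]. unfold Rdiv.
      rewrite Rmult_assoc, Rinv_l by lra. rewrite Rmult_1_r.
      apply Rabs_le. split; nra. }
    pose proof (Rsup_ub _ _ Hb (ex_intro _ x (ex_intro _ y (conj Hxy eq_refl)))).
    fold (dW' d f g) in H.
    apply Rmult_le_compat_r with (r := d x y) in H; [|lra].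
    unfold Rdiv in H. rewrite Rmult_assoc, Rinv_l, Rmult_1_r in H by lra. exact H.
Qed.

Lemma iter_succ {X : Type} (g ginv : X -> X) (H : forall x, g (ginv x) = x) n :
  exists m, forall x, g (iterZ g ginv n x) = iterZ g ginv m x.
Proof.
  destruct n as [|p|p].
  - exists 1%Z. intros x. reflexivity.
  - exists (Zpos (Pos.succ p)). intros x. simpl. rewrite Pos2Nat.inj_succ. reflexivity.
  - destruct (Pos.to_nat p) as [|k] eqn:E.
    { pose proof (Pos2Nat.is_pos p). lia. }
    destruct k as [|k].
    + exists 0%Z. intros x. simpl. rewrite E. simpl. apply H.
    + exists (Zneg (Pos.of_nat (S k))). intros x. unfold iterZ. rewrite E.
      rewrite Nat2Pos.id by lia. simpl. rewrite H. reflexivity.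
Qed.

Lemma iterZ_opp {X : Type} (g ginv : X -> X) n x :
  iterZ ginv g (- n) x = iterZ g ginv n x.
Proof. destruct n; reflexivity. Qed.

Lemma iter_pred {X : Type} (g ginv : X -> X) (H : forall x, ginv (g x) = x) n :
  exists m, forall x, ginv (iterZ g ginv n x) = iterZ g ginv m x.
Proof.
  destruct (iter_succ ginv g H (- n)) as [m Hm].
  exists (- m)%Z. intros x. rewrite <- (iterZ_opp g ginv n), Hm.
  symmetry; apply iterZ_opp.
Qed.

Theorem theorem2 (X : Type) (d : X -> X -> R)
  (Hd : is_metric d) (Hc : metric_compact d)
  (f finv : X -> X) (Hf : bilip_homeo d f finv)
  (Hhyp : hyperbolic_metric d f finv) :
  exists eps delta, 0 < eps /\ 0 < delta /\
    forall g ginv : X -> X, bilip_homeo d g ginv ->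
      dW d f finv g ginv < eps -> expansive_with d g ginv delta.
Proof.
  destruct Hhyp as [dl [lam [Hdl [Hlam Hh]]]].
  exists ((lam - 1) / 2), (dl / 2). split; [lra|split;[lra|]].
  intros g ginv Hg HW.
  destruct Hf as [Hf1 [Hf2 [Lf Lfi]]]. destruct Hg as [Hg1 [Hg2 [Lg Lgi]]].
  pose proof Hd as [Hn [He [Hs Ht]]].
  assert (N0 : 0 <= dC0 d f finv g ginv).
  { unfold dC0. assert (forall a b : X -> X, 0 <= Rsup (fun r => exists x, r = d (a x) (b x))).
    { intros a b. apply Rsup_ge0. intros r [x ->]. apply Hn. }
    pose proof (H f g). pose proof (H finv ginv). lra. }
  assert (N1 : forall a b, 0 <= dW' d a b).
  { intros a b. apply Rsup_ge0. intros r [x [y [Hxy ->]]].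
    unfold Rdiv. apply Rmult_le_pos; [apply Rabs_pos|].
    left. apply Rinv_0_lt_compat. destruct (Hn x y) as [h|h]; auto.
    exfalso; apply Hxy, He; auto. }
  unfold dW in HW.
  pose proof (N1 f g) as N2. pose proof (N1 finv ginv) as N3.
  set (eps := (lam - 1) / 2) in *.
  assert (S1 : dW' d f g < eps) by lra.
  assert (S2 : dW' d finv ginv < eps) by lra.
  set (mu := lam - eps).
  assert (Hmu : 1 < mu) by (unfold mu, eps; lra).
  assert (Key : forall x y, d x y < dl ->
            Rmax (d (g x) (g y)) (d (ginv x) (ginv y)) >= mu * d x y).
  { intros x y Hxy. specialize (Hh x y Hxy).
    pose proof (dW'_bound d f g Hd Lf Lg x y) as B1.
    pose proof (dW'_bound d finv ginv Hd Lfi Lgi x y) as B2.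
    pose proof (Rle_abs (d (f x) (f y) - d (g x) (g y))).
    pose proof (Rle_abs (d (finv x) (finv y) - d (ginv x) (ginv y))).
    pose proof (Hn x y).
    assert (dW' d f g * d x y <= eps * d x y) by (apply Rmult_le_compat_r; lra).
    assert (dW' d finv ginv * d x y <= eps * d x y) by (apply Rmult_le_compat_r; lra).
    unfold mu. unfold Rmax in *.
    destruct (Rle_dec (d (f x) (f y)) (d (finv x) (finv y)));
    destruct (Rle_dec (d (g x) (g y)) (d (ginv x) (ginv y))); lra. }
  intros x y Hall. apply NNPP; intro Hxy.
  set (E := fun r => exists n, r = d (iterZ g ginv n x) (iterZ g ginv n y)).
  assert (Hb : bound E) by (exists (dl / 2); intros r [n ->]; apply Hall).
  assert (Hne : exists r, E r) by (exists (d x y); exists 0%Z; reflexivity).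
  destruct (completeness E Hb Hne) as [m [Hub Hlub]].
  assert (Hpos : 0 < d x y).
  { destruct (Hn x y) as [h|h]; auto. exfalso; apply Hxy, He; auto. }
  assert (Hm : d x y <= m) by (apply Hub; exists 0%Z; reflexivity).
  set (q := m / mu).
  assert (Hq : m = q * mu) by (unfold q; field; lra).
  assert (Ex : exists n, d (iterZ g ginv n x) (iterZ g ginv n y) > q).
  { apply NNPP; intro Hno.
    assert (is_upper_bound E q).
    { intros r [n ->]. apply Rnot_lt_le. intro. apply Hno. exists n. lra. }
    specialize (Hlub q H). nra. }
  destruct Ex as [n Hnq].
  specialize (Key (iterZ g ginv n x) (iterZ g ginv n y)).
  pose proof (Hall n).
  assert (HK := Key ltac:(lra)).
  destruct (iter_succ g ginv Hg2 n) as [m1 Hm1].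
  destruct (iter_pred g ginv Hg1 n) as [m2 Hm2].
  rewrite !Hm1, !Hm2 in HK.
  assert (A1 : d (iterZ g ginv m1 x) (iterZ g ginv m1 y) <= m) by (apply Hub; exists m1; reflexivity).
  assert (A2 : d (iterZ g ginv m2 x) (iterZ g ginv m2 y) <= m) by (apply Hub; exists m2; reflexivity).
  pose proof (Rmax_lub _ _ _ A1 A2). nra.
Qed.
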